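(* Let $G$ be a digraph and $f$ a discrete Morse function on $G$. Then $\mathcal M(G,f)$ is an acyclic matching: there is no cycle $$\alpha_1<\beta_1>\alpha_2<\beta_2>\alpha_3<\cdots>\alpha_k<\beta_k>\alpha_1$$ with $k\ge2$, where all $\beta_i$ are distinct, $(\alpha_i,\beta_i)\in\mathcal M(G,f)$ for $1\le i\le k$, and the $\alpha_i$ are allowed elementary $n$-paths and the $\beta_i$ allowed elementary $(n+1)$-paths for some $n\ge0$.
   Context: A digraph $G=(V,E)$ consists of a set $V$ and $E\subseteq(V\times V)\setminus\{(v,v)\}$; $(u,v)\in E$ is written $u\to v$. An allowed elementary $n$-path is a sequence $v_0\cdots v_n$ of vertices with $v_{i-1}\to v_i\in E$ for $1\le i\le n$. For allowed elementary paths, $\gamma'<\gamma$ (or $\gamma>\gamma'$) means $\gamma'$ is obtained from $\gamma$ by deleting some entries. A map $f:V\to[0,+\infty)$ is a discrete Morse function on $G$ if for every allowed elementary path $v_0\cdots v_n$: (i) there is at most one index $i$ with $f(v_i)=0$ such that $v_0\cdots v_{i-1}v_{i+1}\cdots v_n$ is an allowed elementary $(n-1)$-path; (ii) there is at most one vertex $u$ with $f(u)=0$ such that for some $-1\le j\le n$ the sequence $v_0\cdots v_juv_{j+1}\cdots v_n$ (meaning $uv_0\cdots v_n$ if $j=-1$, $v_0\cdots v_nu$ if $j=n$) is an allowed elementary $(n+1)$-path. Set $f(v_0\cdots v_n)=\sum_if(v_i)$. $\mathcal M(G,f)$ is the set of pairs $(\alpha,\beta)$ with $\alpha$ an allowed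 elementary $n$-path, $\beta$ an allowed elementary $(n+1)$-path for some $n\ge0$, $\alpha<\beta$ and $f(\alpha)=f(\beta)$. *)

(* Defs.v *)
From mathcomp Require Import all_boot all_order all_algebra.
From mathcomp Require Import reals.
Set Implicit Arguments. Unset Strict Implicit. Unset Printing Implicit Defensive.
Import Order.TTheory GRing.Theory Num.Theory.
Local Open Scope ring_scope.

Definition digraph (V : eqType) (E : rel V) : Prop := forall v, ~~ E v v.

(* Allowed elementary path v0 ... vn (n >= 0): a nonempty sequence with
   consecutive vertices joined by edges.  It is an n-path iff size = n+1. *)
Definition allowed (V : eqType) (E : rel V) (p : seq V) : bool :=
  if p is x :: q then path E x q else false.

Definition path_lt (V : eqType) (g' g : seq V) : bool :=
  subseq g' g && (size g' < size g)%N.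

Definition del_at (V : Type) (i : nat) (p : seq V) : seq V :=
  take i p ++ drop i.+1 p.

(* insert u at index k (k = j+1 with -1 <= j <= n) *)
Definition ins_at (V : Type) (k : nat) (u : V) (p : seq V) : seq V :=
  take k p ++ u :: drop k p.

Definition is_dmf (R : realType) (V : eqType) (E : rel V) (f : V -> R) : Prop :=
  (forall v, 0 <= f v) /\
  (forall p, allowed E p ->
     (* (i) at most one index i with f(v_i)=0 whose deletion is allowed *)
     (forall i j vi vj, onth p i = Some vi -> onth p j = Some vj ->
        f vi = 0 -> allowed E (del_at i p) ->
        f vj = 0 -> allowed E (del_at j p) ->
        i = j) /\
     (* (ii) at most one vertex u with f(u)=0 that can be inserted *)
     (forall u1 u2, f u1 = 0 -> f u2 = 0 ->
        (exists k, (k <= size p)%N /\ allowed E (ins_at k u1 p)) ->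
        (exists k, (k <= size p)%N /\ allowed E (ins_at k u2 p)) ->
        u1 = u2)).

Definition fpath (R : realType) (V : Type) (f : V -> R) (p : seq V) : R :=
  \sum_(v <- p) f v.

Definition inM (R : realType) (V : eqType) (E : rel V) (f : V -> R)
  (a b : seq V) : Prop :=
  [/\ allowed E a, allowed E b, size b = (size a).+1, path_lt a b &
      fpath f a = fpath f b].

(* Main.v *)
Require Import Defs.
From mathcomp Require Import all_boot all_order all_algebra.
From mathcomp Require Import reals.
From mathcomp Require Import lra zify.
Set Implicit Arguments. Unset Strict Implicit. Unset Printing Implicit Defensive.
Import Order.TTheory GRing.Theory Num.Theory.
Local Open Scope ring_scope.

Section H.
Variable V : eqType.
Variable E : rel V.

Lemma split_sub (b a : seq V) : subseq a b -> size b = (size a).+1 ->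
  exists l u r, b = l ++ u :: r /\ a = l ++ r.
Proof.
elim: b a => [|x t IH] [|y s] //=.
- move=> _ [] /eqP; rewrite size_eq0 => /eqP ->. by exists [::], x, [::].
- case: (eqVneq y x) => [-> | ne] Hs [Hsz].
  + have [l [u [r [-> ->]]]] := IH s Hs Hsz. by exists (x :: l), u, r.
  + have := (size_subseq_leqif Hs).2; rewrite /= Hsz eqxx => /esym/eqP <-.
    by exists [::], x, (y :: s).
Qed.

Lemma del_split l (x : V) r : del_at (size l) (l ++ x :: r) = l ++ r.
Proof. by rewrite /del_at; elim: l => [|y l IH] /=; [rewrite drop0 | rewrite IH]. Qed.

Lemma onth_split l (x : V) r : onth (l ++ x :: r) (size l) = Some x.
Proof. by elim: l => //= y l ->. Qed.

Lemma ins_split l (x : V) r : ins_at (size l) x (l ++ r) = l ++ x :: r.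
Proof. by rewrite /ins_at take_size_cat // drop_size_cat. Qed.

Lemma allowed_split l (x : V) r :
  allowed E (l ++ x :: r) = allowed E (rcons l x) && allowed E (x :: r).
Proof.
case: l => [|y l] //=.
by rewrite -cat_rcons cat_path last_rcons.
Qed.

Lemma cat_eq_split (l0 r0 l1 r1 : seq V) : l0 ++ r0 = l1 ++ r1 ->
  (size l0 <= size l1)%N -> exists B, l1 = l0 ++ B /\ r0 = B ++ r1.
Proof.
elim: l0 l1 => [|x l0 IH] l1 /=.
- move=> -> _; by exists l1.
- case: l1 => [|y l1] //= [-> He] Hs.
  have [B [-> ->]] := IH _ He Hs. by exists B.
Qed.

Lemma fpath_split (R : realType) (f : V -> R) l u r :
  Defs.fpath f (l ++ u :: r) = Defs.fpath f (l ++ r) + f u.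
Proof. rewrite /Defs.fpath !big_cat big_cons /=; lra. Qed.


Lemma core (R : realType) (f : V -> R) A B C u : is_dmf E f -> B != [::] ->
  f u = 0 -> allowed E (A ++ u :: B ++ C) -> allowed E ((A ++ B) ++ u :: C) -> False.
Proof.
move=> [_ H] nB fu h0 h1.
have hg : allowed E (A ++ u :: B ++ u :: C).
  rewrite allowed_split. move: h0; rewrite allowed_split => /andP[-> h0].
  rewrite -(cat_cons u B) allowed_split. move: (h1); rewrite allowed_split => /andP[_ ->].
  rewrite andbT.
  case/lastP: B nB h0 h1 => [//|B' b] _ h0 h1.
  have -> : rcons (u :: rcons B' b) u = (u :: B') ++ b :: [:: u].
    by rewrite -!cats1 /= -catA.
  rewrite (allowed_split (u :: B')).
  move: h0 h1 => /=; rewrite cat_path => /andP[-> _].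
  have -> : (A ++ rcons B' b) ++ u :: C = (A ++ B') ++ b :: u :: C.
    by rewrite -cats1 -!catA.
  rewrite (allowed_split (A ++ B')) => /andP[_] /=. by case/andP=> ->.
have := (H _ hg).1 (size A) (size (A ++ u :: B)) u u.
rewrite onth_split del_split.
have e : A ++ u :: B ++ u :: C = (A ++ u :: B) ++ u :: C by rewrite -catA.
rewrite e onth_split del_split => /(_ erefl erefl fu).
rewrite -catA in h1; rewrite -catA /= => /(_ h1 fu h0) /eqP.
by rewrite size_cat /= -{1}(addn0 (size A)) eqn_add2l.
Qed.
End H.

Theorem lemma5p2 (R : realType) (V : eqType) (E : rel V) (f : V -> R) :
  digraph E -> is_dmf E f ->
  ~ exists (k : nat) (alpha beta : nat -> seq V) (n : nat),
      [/\ (2 <= k)%N,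
          (forall i, (i < k)%N ->
             size (alpha i) = n.+1 /\ size (beta i) = n.+2),
          (forall i j, (i < k)%N -> (j < k)%N -> beta i = beta j -> i = j),
          (forall i, (i < k)%N -> inM E f (alpha i) (beta i)) &
          (forall i, (i < k)%N -> path_lt (alpha (i.+1 %% k)%N) (beta i))].
Proof.
move=> dg dmf [k [al [be [n [k2 Hsz Hinj HM Hlt]]]]].
have dmf' := dmf; case: dmf' => f0 H.
have key1 : forall i, (i < k)%N -> exists l u r,
    be i = l ++ u :: r /\ al i = l ++ r /\ f u = 0.
  move=> i ik; case: (HM i ik) => _ _ hs /andP[hsub _] hf.
  have [l [u [r [eb ea]]]] := split_sub hsub hs.
  exists l, u, r; split=> //; split=> //.
  move: hf; rewrite eb ea fpath_split. lra.
have key2 : forall i, (i < k)%N -> exists l w r,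
    be i = l ++ w :: r /\ al (i.+1 %% k)%N = l ++ r.
  move=> i ik; have ik' : (i.+1 %% k < k)%N by rewrite ltn_pmod //; lia.
  move: (Hlt i ik) => /andP[hsub _].
  have [_ hb] := Hsz i ik; have [ha _] := Hsz _ ik'.
  apply: split_sub hsub _. by rewrite ha hb.
pose g i := Defs.fpath f (al i).
have Hdec : forall i, (i < k)%N -> g (i.+1 %% k)%N <= g i.
  move=> i ik; have [l [w [r [eb ea]]]] := key2 i ik.
  case: (HM i ik) => _ _ _ _ hf.
  rewrite /g hf eb ea fpath_split. have := f0 w. lra.
have mono : forall j i, (i <= j < k)%N -> g j <= g i.
  elim=> [|j IH] i /andP[ij jk].
    by move: ij; rewrite leqn0 => /eqP ->.
  rewrite leq_eqVlt in ij; case/orP: ij => [/eqP -> //|ij].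
  apply: le_trans (IH i _); last by rewrite -ltnS ij /=; lia.
  have := Hdec j (ltnW jk). by rewrite modn_small.
have k0 : (0 < k)%N by lia.
have k1 : (1 < k)%N by lia.
have w0 : g 0%N <= g k.-1.
  have := Hdec k.-1 ltac:(by rewrite ltn_predL). by rewrite prednK ?modnn.
have g10 : g 1%N = g 0%N.
  apply/le_anti; rewrite (mono 1%N 0%N) /=; last by rewrite k1.
  apply: le_trans w0 (mono k.-1 1%N _). by rewrite ltn_predL k0 andbT -ltnS prednK.
have hal1 : al 1%N = al 0%N.
  have [l [u [r [eb [ea fu]]]]] := key1 0%N k0.
  have [l' [w [r' [eb' ea']]]] := key2 0%N k0.
  rewrite modn_small // in ea'.
  have fw : f w = 0.
    case: (HM 0%N k0) => _ _ _ _ hf.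
    move: g10; rewrite /g hf eb' ea' fpath_split. lra.
  have e1 : onth (be 0%N) (size l) = Some u by rewrite eb onth_split.
  have e2 : onth (be 0%N) (size l') = Some w by rewrite eb' onth_split.
  have d1 : del_at (size l) (be 0%N) = al 0%N by rewrite eb ea del_split.
  have d2 : del_at (size l') (be 0%N) = al 1%N by rewrite eb' ea' del_split.
  case: (HM 0%N k0) => _ hb0 _ _ _.
  have hs := (H _ hb0).1 _ _ _ _ e1 e2 fu
    ltac:(rewrite d1; by case: (HM 0%N k0)) fw
    ltac:(rewrite d2; by case: (HM 1%N k1)).
  by rewrite -d2 -hs d1.
have [l0 [u0 [r0 [eb0 [ea0 fu0]]]]] := key1 0%N k0.
have [l1 [u1 [r1 [eb1 [ea1 fu1]]]]] := key1 1%N k1.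
case: (HM 0%N k0) => ha0 hb0 _ _ _.
case: (HM 1%N k1) => _ hb1 _ _ _.
have u01 : u0 = u1.
  apply: ((H _ ha0).2 u0 u1 fu0 fu1).
  - exists (size l0); split; first by rewrite ea0 size_cat leq_addr.
    by rewrite ea0 ins_split -eb0.
  - exists (size l1); split; first by rewrite -hal1 ea1 size_cat leq_addr.
    by rewrite -hal1 ea1 ins_split -eb1.
subst u1.
have neq : be 0%N <> be 1%N by move=> e; have := Hinj 0%N 1%N k0 k1 e.
have hcat : l0 ++ r0 = l1 ++ r1 by rewrite -ea0 -ea1 hal1.
rewrite eb0 in hb0; rewrite eb1 in hb1.
case: (ltngtP (size l0) (size l1)) => hl.
- have [B [el er]] := cat_eq_split hcat (ltnW hl).
  apply: (core (A := l0) (B := B) (C := r1) dmf _ fu0).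
  + apply/eqP => B0; move: hl; rewrite el B0 cats0 ltnn //.
  + by rewrite -er.
  + by rewrite -el.
- have [B [el er]] := cat_eq_split (esym hcat) (ltnW hl).
  apply: (core (A := l1) (B := B) (C := r0) dmf _ fu0).
  + apply/eqP => B0; move: hl; rewrite el B0 cats0 ltnn //.
  + by rewrite -er.
  + by rewrite -el.
- apply: neq; rewrite eb0 eb1.
  have el : l0 = l1.
    by have := congr1 (take (size l0)) hcat; rewrite take_size_cat // hl take_size_cat.
  have er : r0 = r1.
    by have := congr1 (drop (size l0)) hcat; rewrite drop_size_cat // hl drop_size_cat.
  by rewrite el er.
Qed.
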